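(* Let $\mathcal D$ be a positively oriented Descartes configuration and let $\mathbb D(\mathcal P)$ be the set of all ordered, oriented Descartes configurations whose underlying unordered, unoriented configuration is the underlying configuration of some member of $\mathcal F(\mathcal D)$. Then $\mathbb D(\mathcal P)$ is invariant under the Apollonian group $\mathcal A$ acting by $\mathbf W_{\mathcal D'}\mapsto\mathbf U\mathbf W_{\mathcal D'}$, and it is the union of exactly $48$ orbits of $\mathcal A$; each of these orbits contains exactly one ordered, oriented representative of each unordered, unoriented Descartes configuration underlying a member of $\mathcal F(\mathcal D)$.
   Context: Oriented circles/lines, oriented curvature ($\pm1/r$, $+$ iff interior is the bounded disk; lines curvature $0$, interior the half-plane the unit normal points into). A Descartes configuration: four mutually tangent circles/lines with six distinct tangency points; oriented if interiors pairwise disjoint or so after reversing all orientations; positively oriented if interiors pairwise disjoint. Replacement: in an oriented Descartes configuration, a circle $C_i$ may be replaced by the unique other circle tangent to the remaining three at new points, oriented so the result is an oriented Descartes configuration; $\mathcal F(\mathcal D)$ is the set of configurations obtained from $\mathcal D$ by finitely many replacements. Augmented curvature-center coordinates: for center $\mathbf c$, oriented radius $r$: $\mathbf w(C)=((|\mathbf c|^2-r^2)/r,1/r,c_1/r,c_2/r)$; for the line $\mathbf x\cdot\mathbf h=m$ with interior-pointing unit normal $\mathbf h$: $(2m,0,h_1,h_2)$. $\mathbf W_{\mathcal D}$ has rows $\mathbf w(C_k)$. Known fact: $\mathcal D\mapsto\mathbf W_{\mathcal D}$ is a bijection from ordered, oriented Descartes configurations onto $\{\mathbf W:\mathbf W^T\mathbf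 Q_D\mathbf W=\mathbf Q_W\}$, with $\mathbf Q_D=\mathbf I-\frac12\mathbf 1\mathbf 1^T$, $\mathbf Q_W=\begin{pmatrix}0&-4&0&0\\-4&0&0&0\\0&0&2&0\\0&0&0&2\end{pmatrix}$; so any $\mathbf U$ with $\mathbf U^T\mathbf Q_D\mathbf U=\mathbf Q_D$ acts on ordered, oriented Descartes configurations. The Apollonian group is $\mathcal A=\langle\mathbf S_1,\mathbf S_2,\mathbf S_3,\mathbf S_4\rangle$, where $\mathbf S_i$ agrees with the $4\times4$ identity except in row $i$, which has $-1$ in position $i$ and $2$ in the other three positions (e.g. $\mathbf S_1$ has first row $(-1,2,2,2)$). *)

(* Defs.v *)
From HB Require Import structures.
From mathcomp Require Import all_boot all_order all_algebra.
From mathcomp Require Import reals.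
Set Implicit Arguments. Unset Strict Implicit. Unset Printing Implicit Defensive.
Import Order.TTheory GRing.Theory Num.Theory.
Local Open Scope ring_scope.

Section Descartes.
Variable R : realType.

(* Oriented circle/line in R^2:
   OCirc c r : circle of center c, oriented radius r (r <> 0);
              ointerior = bounded disk iff r > 0 (curvature 1/r).
   OLine h m : line {x | x.h = m} with unit normal h pointing into the
              ointerior, i.e. ointerior = {x | x.h > m}. *)
Inductive ocircle := OCirc of (R * R) & R | OLine of (R * R) & R.

Definition wf_ocircle (C : ocircle) : Prop :=
  match C with
  | OCirc _ r => r != 0
  | OLine h _ => h.1 ^+ 2 + h.2 ^+ 2 = 1
  end.

(* Points of the extended plane R^2 u {oo}; None is the point at infinity. *)
Definition xpoint := option (R * R).

Definition on_circle (C : ocircle) (p : xpoint) : Prop :=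
  match C, p with
  | OCirc c r, Some x => (x.1 - c.1) ^+ 2 + (x.2 - c.2) ^+ 2 = r ^+ 2
  | OCirc _ _, None => False
  | OLine h m, Some x => x.1 * h.1 + x.2 * h.2 = m
  | OLine _ _, None => True
  end.

Definition same_circle (C C' : ocircle) : Prop :=
  forall p, on_circle C p <-> on_circle C' p.

(* C and C' are tangent at p: their point sets (in the extended plane)
   meet exactly in {p} (parallel lines are tangent at oo). *)
Definition tangent_at (C C' : ocircle) (p : xpoint) : Prop :=
  [/\ on_circle C p, on_circle C' p &
      forall q, on_circle C q -> on_circle C' q -> q = p].

Definition ointerior (C : ocircle) (x : R * R) : Prop :=
  match C with
  | OCirc c r =>
      let d := (x.1 - c.1) ^+ 2 + (x.2 - c.2) ^+ 2 in
      if 0 < r then d < r ^+ 2 else r ^+ 2 < d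
  | OLine h m => m < x.1 * h.1 + x.2 * h.2
  end.

Definition reverse (C : ocircle) : ocircle :=
  match C with
  | OCirc c r => OCirc c (- r)
  | OLine h m => OLine (- h.1, - h.2) (- m)
  end.

Definition config := 'I_4 -> ocircle.

Definition descartes (E : config) : Prop :=
  [/\ forall i, wf_ocircle (E i),
      forall i j, i != j -> exists p, tangent_at (E i) (E j) p &
      forall i j k l : 'I_4, (i < j)%N -> (k < l)%N -> (i, j) != (k, l) ->
        forall p q, tangent_at (E i) (E j) p -> tangent_at (E k) (E l) q ->
          p <> q].

Definition pos_oriented (E : config) : Prop :=
  forall i j, i != j -> forall x, ~ (ointerior (E i) x /\ ointerior (E j) x).

Definition oriented (E : config) : Prop :=
  pos_oriented E \/ pos_oriented (fun i => reverse (E i)).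

Definition oriented_descartes (E : config) : Prop :=
  descartes E /\ oriented E.

Definition same_uu (E E' : config) : Prop :=
  (forall i, exists j, same_circle (E i) (E' j)) /\
  (forall j, exists i, same_circle (E i) (E' j)).

Definition replacement (E : config) (i : 'I_4) (E' : config) : Prop :=
  [/\ oriented_descartes E, oriented_descartes E',
      forall j, j != i -> E' j = E j,
      ~ same_circle (E' i) (E i) &
      forall j, j != i -> forall p q,
        tangent_at (E i) (E j) p -> tangent_at (E' i) (E j) q -> p <> q].

Inductive in_F (D : config) : config -> Prop :=
  | inF_refl : in_F D D
  | inF_step E i E' : in_F D E -> replacement E i E' -> in_F D E'.

Definition in_DP (D E : config) : Prop :=
  oriented_descartes E /\ exists D', in_F D D' /\ same_uu E D'.

(* augmented curvature-center coordinates *)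
Definition wvec (C : ocircle) : 'I_4 -> R :=
  fun l =>
  match C with
  | OCirc c r =>
      [:: (c.1 ^+ 2 + c.2 ^+ 2 - r ^+ 2) / r; r^-1; c.1 / r; c.2 / r]`_l
  | OLine h m => [:: 2 * m; 0; h.1; h.2]`_l
  end.

Definition Wmat (E : config) : 'M[R]_4 := \matrix_(k, l) wvec (E k) l.

Definition Sgen (i : 'I_4) : 'M[R]_4 :=
  \matrix_(k, l) if k == i then (if l == i then -1 else 2)
                 else (if k == l then 1 else 0).

Inductive in_apollonian : 'M[R]_4 -> Prop :=
  | apo1 : in_apollonian 1%:M
  | apoS i U : in_apollonian U -> in_apollonian (Sgen i *m U)
  | apoSinv i U : in_apollonian U -> in_apollonian (invmx (Sgen i) *m U).

Definition apo_orbit (E E' : config) : Prop :=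
  oriented_descartes E' /\
  exists U, in_apollonian U /\ Wmat E' = U *m Wmat E.

End Descartes.

(* Main.v *)
Require Import Defs.
From HB Require Import structures.
From mathcomp Require Import all_boot all_order all_algebra all_fingroup.
From mathcomp Require Import reals ring lra zify.
Import Order.TTheory GRing.Theory Num.Theory.
Local Open Scope ring_scope.
Set Implicit Arguments. Unset Strict Implicit. Unset Printing Implicit Defensive.

Section Geo.
Variable R : realType.
Definition o0 : 'I_4 := @Ordinal 4 0 isT.
Definition o1 : 'I_4 := @Ordinal 4 1 isT.
Definition o2 : 'I_4 := @Ordinal 4 2 isT.
Definition o3 : 'I_4 := @Ordinal 4 3 isT.

Lemma ord4P (P : 'I_4 -> Prop) : P o0 -> P o1 -> P o2 -> P o3 -> forall i, P i.
Proof.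
move=> H0 H1 H2 H3 [[|[|[|[|n]]]] Hn] //.
- by have -> : Ordinal Hn = o0 by apply: val_inj.
- by have -> : Ordinal Hn = o1 by apply: val_inj.
- by have -> : Ordinal Hn = o2 by apply: val_inj.
- by have -> : Ordinal Hn = o3 by apply: val_inj.
Qed.

Lemma sum4 (F : 'I_4 -> R) : \sum_(i < 4) F i = F o0 + F o1 + F o2 + F o3.
Proof.
rewrite !big_ord_recr big_ord0 /= add0r.
by congr (_ + _ + _ + _); congr F; apply: val_inj.
Qed.

Definition vec := 'I_4 -> R.
Definition Lf (x y : vec) : R :=
  - (x o0 * y o1 + x o1 * y o0) + 2 * (x o2 * y o2 + x o3 * y o3).

Definition nv (p : xpoint R) : vec := fun l =>
  match p with
  | Some x => [:: x.1 ^+ 2 + x.2 ^+ 2; 1; x.1; x.2]`_l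
  | None => [:: 1; 0; 0; 0]`_l
  end.

Lemma wf_Lf (C : ocircle R) : wf_ocircle C -> Lf (wvec C) (wvec C) = 2.
Proof.
case: C => [c r|h m] /= H; rewrite /Lf /wvec /=.
  field. done.
nra.
Qed.

Lemma on_Lf (C : ocircle R) p : wf_ocircle C ->
  on_circle C p <-> Lf (wvec C) (nv p) = 0.
Proof.
case: C => [c r|h m]; case: p => [x|] /= H; rewrite /Lf /wvec /nv /=.
- split => E.
  + have -> : r ^+ 2 = (x.1 - c.1) ^+ 2 + (x.2 - c.2) ^+ 2 by rewrite E.
    field. done.
  + have : (r ^+ 2 - ((x.1 - c.1) ^+ 2 + (x.2 - c.2) ^+ 2)) / r = 0.
      rewrite -E. field. done.
    move/eqP; rewrite mulf_eq0 invr_eq0 (negbTE H) orbF subr_eq0 => /eqP ->. done.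
- split => //. move=> E. move: H. have -> : r = r^-1^-1 by rewrite invrK.
  rewrite invr_eq0. have -> : r^-1 = 0 by lra. by rewrite eqxx.
- split => E; lra.
- split => //; lra.
Qed.

Lemma int_Lf (C : ocircle R) x : wf_ocircle C ->
  ointerior C x <-> 0 < Lf (wvec C) (nv (Some x)).
Proof.
case: C => [c r|h m] /= H; rewrite /Lf /wvec /nv /=.
- have -> : - ((c.1 ^+ 2 + c.2 ^+ 2 - r ^+ 2) / r * 1 + r^-1 * (x.1 ^+ 2 + x.2 ^+ 2)) +
      2 * (c.1 / r * x.1 + c.2 / r * x.2) = (r ^+ 2 - ((x.1 - c.1) ^+ 2 + (x.2 - c.2) ^+ 2)) / r.
    field. done.
  case: ltP => hr.
  + by rewrite pmulr_lgt0 ?invr_gt0 // subr_gt0.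
  + have hr' : r < 0 by rewrite lt_neqAle H hr.
    by rewrite nmulr_lgt0 ?invr_lt0 // subr_lt0.
- split => E; lra.
Qed.

End Geo.

Section G.
Variable R : realType.
Local Notation vec := (vec R).
Definition Ov (w : vec) (p : xpoint R) := Lf w (nv p) = 0.
Definition Fw (w : vec) (x : R * R) := Lf w (nv (Some x)).

Lemma FwE w x : Fw w x = - (w o0 + w o1 * (x.1 ^+ 2 + x.2 ^+ 2)) + 2 * (w o2 * x.1 + w o3 * x.2).
Proof. rewrite /Fw /Lf /nv /=; ring. Qed.

Lemma OvNone w : Ov w None <-> w o1 = 0.
Proof. rewrite /Ov /Lf /nv /=; split; lra. Qed.

Lemma OvSome w x : Ov w (Some x) <-> Fw w x = 0.
Proof. by []. Qed.

Lemma two_points w : Lf w w = 2 -> exists p q, p <> q /\ Ov w p /\ Ov w q.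
Proof.
rewrite /Lf => H.
have [w1z|w1n] := eqVneq (w o1) 0.
  exists None, (Some (w o0 / 2 * w o2, w o0 / 2 * w o3)); split => //; split.
    by apply/OvNone.
  rewrite OvSome FwE /= w1z.
  have h1 : w o2 * w o2 + w o3 * w o3 = 1 by rewrite w1z in H; lra.
  transitivity (w o0 * (w o2 * w o2 + w o3 * w o3 - 1)); first by field.
  by rewrite h1 subrr mulr0.
set c1 := w o2 / w o1; set c2 := w o3 / w o1.
exists (Some (c1 + (w o1)^-1, c2)), (Some (c1 - (w o1)^-1, c2)); split; last split.
- case=> E. have : (w o1)^-1 = 0 by lra.
  by move/eqP; rewrite invr_eq0 (negbTE w1n).
- rewrite OvSome FwE /= /c1 /c2.
  have E : w o0 = (w o2 ^+ 2 + w o3 ^+ 2 - 1) / w o1.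
    apply: (mulIf w1n). rewrite mulfVK //. lra.
  rewrite E. field. done.
- rewrite OvSome FwE /= /c1 /c2.
  have E : w o0 = (w o2 ^+ 2 + w o3 ^+ 2 - 1) / w o1.
    apply: (mulIf w1n). rewrite mulfVK //. lra.
  rewrite E. field. done.
Qed.

End G.

Section G1.
Variable R : realType.
Local Notation vec := (vec R).

Lemma Fshift (w : vec) (x : R * R) v1 v2 :
  Fw w (x.1 + v1, x.2 + v2) = Fw w x + 2 * ((w o2 - w o1 * x.1) * v1 + (w o3 - w o1 * x.2) * v2)
     - w o1 * (v1 ^+ 2 + v2 ^+ 2).
Proof. rewrite !FwE /=; ring. Qed.

Lemma LfE (w w' : vec) : Lf w w' = - (w o0 * w' o1 + w o1 * w' o0) + 2 * (w o2 * w' o2 + w o3 * w' o3).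
Proof. by []. Qed.

Lemma pairG1 (w w' : vec) p : Lf w w = 2 -> Lf w' w' = 2 -> Ov w p -> Ov w' p ->
  (forall q, Ov w q -> Ov w' q -> q = p) ->
  (forall x, ~ (0 < Fw w x /\ 0 < Fw w' x)) ->
  Lf w w' = -2 /\ 0 < (w o0 + w' o0) + (w o1 + w' o1).
Proof.
move=> Hw Hw' Op Op' Hu Hd.
case: p Op Op' Hu => [x0|] Op Op' Hu.
- have {}Op : Fw w x0 = 0 := Op. have {}Op' : Fw w' x0 = 0 := Op'.
  set x1 := x0.1 in Op Op' *; set x2 := x0.2 in Op Op' *.
  pose a1 := w o2 - w o1 * x1; pose a2 := w o3 - w o1 * x2.
  pose b1 := w' o2 - w' o1 * x1; pose b2 := w' o3 - w' o1 * x2.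
  have I1 : Lf w w = 2 * (a1 ^+ 2 + a2 ^+ 2) + 2 * w o1 * Fw w x0.
    by rewrite FwE LfE /a1 /a2 /x1 /x2; ring.
  have I2 : Lf w' w' = 2 * (b1 ^+ 2 + b2 ^+ 2) + 2 * w' o1 * Fw w' x0.
    by rewrite FwE LfE /b1 /b2 /x1 /x2; ring.
  have I3 : Lf w w' = 2 * (a1 * b1 + a2 * b2) + w' o1 * Fw w x0 + w o1 * Fw w' x0.
    by rewrite !FwE LfE /a1 /a2 /b1 /b2 /x1 /x2; ring.
  rewrite Op Op' !mulr0 !addr0 in I1 I2 I3.
  have Ha : a1 ^+ 2 + a2 ^+ 2 = 1 by lra.
  have Hb : b1 ^+ 2 + b2 ^+ 2 = 1 by lra.
  set G := a1 * b1 + a2 * b2 in I3.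
  have HG : 1 + G <= 0.
    rewrite leNgt; apply/negP => HG.
    pose K := 1 + `|w o1| + `|w' o1|.
    have K0 : 0 < K by rewrite /K; have := normr_ge0 (w o1); have := normr_ge0 (w' o1); lra.
    pose t := K^-1.
    have t0 : 0 < t by rewrite invr_gt0.
    have wt : w o1 * t < 1.
      rewrite /t ltr_pdivrMr // mul1r /K. have := ler_norm (w o1); have := normr_ge0 (w' o1); lra.
    have wt' : w' o1 * t < 1.
      rewrite /t ltr_pdivrMr // mul1r /K. have := ler_norm (w' o1); have := normr_ge0 (w o1); lra.
    clearbody t.
    apply: (Hd (x1 + t * (a1 + b1), x2 + t * (a2 + b2))); split.
    + rewrite Fshift Op.
      have -> : 0 + 2 * (a1 * (t * (a1 + b1)) + a2 * (t * (a2 + b2))) -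
        w o1 * ((t * (a1 + b1)) ^+ 2 + (t * (a2 + b2)) ^+ 2) =
        2 * t * (1 + G) * (1 - w o1 * t).
        transitivity (2 * t * (a1 ^+ 2 + a2 ^+ 2 + G) -
           w o1 * t ^+ 2 * ((a1 ^+ 2 + a2 ^+ 2) + (b1 ^+ 2 + b2 ^+ 2) + 2 * G)).
          rewrite /G /a1 /a2 /b1 /b2. ring.
        rewrite Ha Hb. ring.
      apply: mulr_gt0; last lra. apply: mulr_gt0 => //. apply: mulr_gt0 => //.
    + rewrite Fshift Op'.
      have -> : 0 + 2 * (b1 * (t * (a1 + b1)) + b2 * (t * (a2 + b2))) -
        w' o1 * ((t * (a1 + b1)) ^+ 2 + (t * (a2 + b2)) ^+ 2) =
        2 * t * (1 + G) * (1 - w' o1 * t).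
        transitivity (2 * t * (b1 ^+ 2 + b2 ^+ 2 + G) -
           w' o1 * t ^+ 2 * ((a1 ^+ 2 + a2 ^+ 2) + (b1 ^+ 2 + b2 ^+ 2) + 2 * G)).
          rewrite /G /a1 /a2 /b1 /b2. clearbody x1 x2. ring.
        rewrite Ha Hb. ring.
      apply: mulr_gt0; last lra. apply: mulr_gt0 => //. apply: mulr_gt0 => //.
  have HS : (a1 + b1) ^+ 2 + (a2 + b2) ^+ 2 = 2 + 2 * G.
    transitivity ((a1 ^+ 2 + a2 ^+ 2) + (b1 ^+ 2 + b2 ^+ 2) + 2 * G).
      by rewrite /G; ring.
    by rewrite Ha Hb; ring.
  have S1 := sqr_ge0 (a1 + b1). have S2 := sqr_ge0 (a2 + b2).
  have HG1 : G = -1 by lra.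
  have E1 : a1 + b1 = 0 by apply/eqP; rewrite -sqrf_eq0; apply/eqP; lra.
  have E2 : a2 + b2 = 0 by apply/eqP; rewrite -sqrf_eq0; apply/eqP; lra.
  split; first by rewrite I3 HG1; ring.
  pose lam := w o1 + w' o1.
  have U2 : w o2 + w' o2 = lam * x1 by rewrite /lam; move: E1; rewrite /a1 /b1; lra.
  have U3 : w o3 + w' o3 = lam * x2 by rewrite /lam; move: E2; rewrite /a2 /b2; lra.
  have U0 : w o0 + w' o0 = lam * (x1 ^+ 2 + x2 ^+ 2).
    have : Fw w x0 + Fw w' x0 = 0 by rewrite Op Op' addr0.
    rewrite !FwE -/x1 -/x2 => H.
    have : - (w o0 + w' o0) - lam * (x1 ^+ 2 + x2 ^+ 2) + 2 * ((w o2 + w' o2) * x1 + (w o3 + w' o3) * x2) = 0.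
      rewrite -H /lam; ring.
    rewrite U2 U3 => H'. lra.
  rewrite U0 -/lam.
  have [lpos|lnpos] := ltP 0 lam.
    have : 0 <= x1 ^+ 2 + x2 ^+ 2 by rewrite addr_ge0 // sqr_ge0.
    move=> /(mulr_ge0 (ltW lpos)) H0. by apply: ltr_wpDl.
  exfalso.
  have [lz|lneg] := eqVneq lam 0.
    have wneg : forall l, w' l = - w l.
      apply: ord4P; apply/eqP; rewrite -addr_eq0 addrC; apply/eqP.
      + by rewrite U0 lz mul0r.
      + by rewrite -lz /lam addrC.
      + by rewrite U2 lz mul0r.
      + by rewrite U3 lz mul0r.
    have Oeq : forall q, Ov w q -> Ov w' q.
      move=> q; rewrite /Ov !LfE !wneg => H; rewrite -[RHS]oppr0 -H; ring.
    have [q1 [q2 [q12 [O1 O2]]]] := two_points Hw.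
    by apply: q12; rewrite (Hu _ O1 (Oeq _ O1)) (Hu _ O2 (Oeq _ O2)).
  have lneg' : lam < 0 by rewrite lt_neqAle lneg.
  have Eb1 : b1 = - a1 by lra.
  have Eb2 : b2 = - a2 by lra.
  have [cz|cnz] := eqVneq (w o1 - w' o1) 0.
    apply: (Hd (x1 + - a2, x2 + a1)); split.
    + rewrite Fshift Op -/a1 -/a2.
      have -> : 0 + 2 * (a1 * - a2 + a2 * a1) - w o1 * ((- a2) ^+ 2 + a1 ^+ 2) = - w o1.
        rewrite -[RHS]mulr1 -Ha; ring.
      move: lneg' cz; rewrite /lam; lra.
    + rewrite Fshift Op' -/b1 -/b2 Eb1 Eb2.
      have -> : 0 + 2 * (- a1 * - a2 + - a2 * a1) - w' o1 * ((- a2) ^+ 2 + a1 ^+ 2) = - w' o1.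
        rewrite -[RHS]mulr1 -Ha; ring.
      move: lneg' cz; rewrite /lam; lra.
  pose t := 2 / (w o1 - w' o1).
  have ht : t * (w o1 - w' o1) = 2 by rewrite /t mulfVK.
  have tn0 : 0 < t ^+ 2.
    rewrite exprn_even_gt0 //= /t mulf_neq0 //; first by rewrite pnatr_eq0.
    by rewrite invr_eq0.
  apply: (Hd (x1 + t * (a1 - a2), x2 + t * (a2 + a1))); split.
  + rewrite Fshift Op -/a1 -/a2.
    have -> : 0 + 2 * (a1 * (t * (a1 - a2)) + a2 * (t * (a2 + a1))) -
       w o1 * ((t * (a1 - a2)) ^+ 2 + (t * (a2 + a1)) ^+ 2) = - t ^+ 2 * lam.
      transitivity (2 * t * (a1 ^+ 2 + a2 ^+ 2) - 2 * w o1 * t ^+ 2 * (a1 ^+ 2 + a2 ^+ 2)).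
        ring.
      rewrite Ha /lam /t. by field.
    by rewrite mulNr -mulrN; apply: mulr_gt0 => //; rewrite oppr_gt0.
  + rewrite Fshift Op' -/b1 -/b2 Eb1 Eb2.
    have -> : 0 + 2 * (- a1 * (t * (a1 - a2)) + - a2 * (t * (a2 + a1))) -
       w' o1 * ((t * (a1 - a2)) ^+ 2 + (t * (a2 + a1)) ^+ 2) = - t ^+ 2 * lam.
      transitivity (- 2 * t * (a1 ^+ 2 + a2 ^+ 2) - 2 * w' o1 * t ^+ 2 * (a1 ^+ 2 + a2 ^+ 2)).
        ring.
      rewrite Ha /lam /t. by field.
    by rewrite mulNr -mulrN; apply: mulr_gt0 => //; rewrite oppr_gt0.
- (* p = None : two lines *)
  rewrite !OvNone in Op Op'.
  rewrite !LfE Op Op' in Hw Hw' *.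
  have Hh : w o2 ^+ 2 + w o3 ^+ 2 = 1 by lra.
  have Hh' : w' o2 ^+ 2 + w' o3 ^+ 2 = 1 by lra.
  pose G := w o2 * w' o2 + w o3 * w' o3.
  have F1 : forall x, Fw w x = - w o0 + 2 * (w o2 * x.1 + w o3 * x.2).
    by move=> x; rewrite FwE Op; ring.
  have F2 : forall x, Fw w' x = - w' o0 + 2 * (w' o2 * x.1 + w' o3 * x.2).
    by move=> x; rewrite FwE Op'; ring.
  have HG : 1 + G <= 0.
    rewrite leNgt; apply/negP => HG.
    pose T := (`|w o0| + `|w' o0| + 1) / (2 * (1 + G)).
    have HT : T * (2 * (1 + G)) = `|w o0| + `|w' o0| + 1 by rewrite /T mulfVK // mulf_neq0 // lt0r_neq0.
    clearbody T.
    apply: (Hd (T * (w o2 + w' o2), T * (w o3 + w' o3))); rewrite F1 F2 /=; split.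
    + have -> : - w o0 + 2 * (w o2 * (T * (w o2 + w' o2)) + w o3 * (T * (w o3 + w' o3))) =
         - w o0 + T * (2 * (1 + G)).
        rewrite -Hh /G; ring.
      rewrite HT. have := ler_norm (w o0); have := normr_ge0 (w' o0); lra.
    + have -> : - w' o0 + 2 * (w' o2 * (T * (w o2 + w' o2)) + w' o3 * (T * (w o3 + w' o3))) =
         - w' o0 + T * (2 * (1 + G)).
        rewrite -Hh' /G; ring.
      rewrite HT. have := ler_norm (w' o0); have := normr_ge0 (w o0); lra.
  have HS : (w o2 + w' o2) ^+ 2 + (w o3 + w' o3) ^+ 2 = 2 + 2 * G.
    transitivity ((w o2 ^+ 2 + w o3 ^+ 2) + (w' o2 ^+ 2 + w' o3 ^+ 2) + 2 * G).
      by rewrite /G; ring.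
    by rewrite Hh Hh'; ring.
  have S1 := sqr_ge0 (w o2 + w' o2). have S2 := sqr_ge0 (w o3 + w' o3).
  have HG1 : G = -1 by lra.
  have E2 : w' o2 = - w o2.
    apply/eqP; rewrite -subr_eq0 opprK addrC -sqrf_eq0; apply/eqP; lra.
  have E3 : w' o3 = - w o3.
    apply/eqP; rewrite -subr_eq0 opprK addrC -sqrf_eq0; apply/eqP; lra.
  split.
    rewrite E2 E3. transitivity (-2 * (w o2 ^+ 2 + w o3 ^+ 2)); first ring.
    by rewrite Hh mulr1.
  rewrite !addr0.
  have [//|] := ltP 0 (w o0 + w' o0) => hle.
  exfalso.
  have [z|nz] := eqVneq (w o0 + w' o0) 0.
    have : Some (w o0 / 2 * w o2, w o0 / 2 * w o3) = None.
      apply: Hu; rewrite OvSome.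
      + rewrite F1 /=. transitivity (w o0 * (w o2 ^+ 2 + w o3 ^+ 2 - 1)); first by field.
        by rewrite Hh subrr mulr0.
      + rewrite F2 /= E2 E3. transitivity (- (w o0 + w' o0) - w o0 * (w o2 ^+ 2 + w o3 ^+ 2 - 1)); first by field.
        by rewrite Hh z; ring.
    by [].
  have hneg : w o0 + w' o0 < 0 by rewrite lt_neqAle nz hle.
  pose t := (w o0 - w' o0) / 4.
  apply: (Hd (t * w o2, t * w o3)); rewrite F1 F2 /=; split.
  + have -> : - w o0 + 2 * (w o2 * (t * w o2) + w o3 * (t * w o3)) = - (w o0 + w' o0) / 2.
      transitivity (- w o0 + 2 * t * (w o2 ^+ 2 + w o3 ^+ 2)); first ring.
      by rewrite Hh /t; field.
    lra.
  + have -> : - w' o0 + 2 * (w' o2 * (t * w o2) + w' o3 * (t * w o3)) = - (w o0 + w' o0) / 2.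
      rewrite E2 E3.
      transitivity (- w' o0 - 2 * t * (w o2 ^+ 2 + w o3 ^+ 2)); first ring.
      by rewrite Hh /t; field.
    lra.
Qed.

End G1.

Section G2.
Variable R : realType.
Local Notation vec := (vec R).

Lemma LfC (w w' : vec) : Lf w w' = Lf w' w.
Proof. rewrite !LfE; ring. Qed.

Lemma Lf_scale (u v y : vec) k : (forall l, u l = k * v l) -> Lf u y = k * Lf v y.
Proof. move=> H; rewrite !LfE !H; ring. Qed.

Lemma Lf_scaler (u v y : vec) k : (forall l, u l = k * v l) -> Lf y u = k * Lf y v.
Proof. move=> H; rewrite !LfE !H; ring. Qed.

Lemma Lf_ext (u v y : vec) : (forall l, u l = v l) -> Lf u y = Lf v y.
Proof. move=> H; rewrite !LfE !H; ring. Qed.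

Lemma Lf_extr (u v y : vec) : (forall l, u l = v l) -> Lf y u = Lf y v.
Proof. move=> H; rewrite !LfE !H; ring. Qed.

Lemma Lf_addl (w w' y : vec) : Lf (fun l => w l + w' l) y = Lf w y + Lf w' y.
Proof. rewrite !LfE; ring. Qed.

Lemma Lnv (p q : xpoint R) : Lf (nv p) (nv q) = 0 -> p = q.
Proof.
case: p => [[p1 p2]|]; case: q => [[q1 q2]|]; rewrite LfE /nv /= => H //.
- have : (p1 - q1) ^+ 2 + (p2 - q2) ^+ 2 = 0.
    rewrite -[RHS]oppr0 -H; ring.
  move=> H2. have S1 := sqr_ge0 (p1 - q1). have S2 := sqr_ge0 (p2 - q2).
  have /eqP : (p1 - q1) ^+ 2 = 0 by lra.
  have /eqP : (p2 - q2) ^+ 2 = 0 by lra.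
  rewrite !sqrf_eq0 !subr_eq0 => /eqP -> /eqP -> //.
- exfalso; move: H; lra.
- exfalso; move: H; lra.
Qed.

Lemma Lnv_le (p : xpoint R) x : Lf (nv p) (nv (Some x)) <= 0.
Proof.
case: p => [[p1 p2]|]; rewrite LfE /nv /=.
- have -> : - ((p1 ^+ 2 + p2 ^+ 2) * 1 + 1 * (x.1 ^+ 2 + x.2 ^+ 2)) + 2 * (p1 * x.1 + p2 * x.2)
     = - ((p1 - x.1) ^+ 2 + (p2 - x.2) ^+ 2) by ring.
  rewrite oppr_le0. by rewrite addr_ge0 // sqr_ge0.
- lra.
Qed.

Lemma nullrep (u : vec) : Lf u u = 0 -> 0 < u o0 + u o1 ->
  exists p k, 0 < k /\ forall l, u l = k * nv p l.
Proof.
rewrite LfE => H0 Hp.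
have Hq : u o0 * u o1 = u o2 ^+ 2 + u o3 ^+ 2 by lra.
have [u1p|u1n] := ltP 0 (u o1).
  exists (Some (u o2 / u o1, u o3 / u o1)), (u o1); split => //.
  have u1n0 : u o1 != 0 by rewrite lt0r_neq0.
  apply: ord4P; rewrite /nv /=.
  - apply: (mulIf u1n0). rewrite Hq. by field.
  - by rewrite mulr1.
  - by rewrite mulrC mulfVK.
  - by rewrite mulrC mulfVK.
have u10 : u o1 = 0.
  apply/eqP; rewrite eq_le u1n /= leNgt; apply/negP => Hneg.
  have : 0 <= u o0 * u o1 by rewrite Hq addr_ge0 // sqr_ge0.
  rewrite nmulr_lge0 // => H. lra.
have S1 := sqr_ge0 (u o2). have S2 := sqr_ge0 (u o3).
rewrite u10 mulr0 in Hq.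
have u2 : u o2 = 0 by apply/eqP; rewrite -sqrf_eq0; apply/eqP; lra.
have u3 : u o3 = 0 by apply/eqP; rewrite -sqrf_eq0; apply/eqP; lra.
exists None, (u o0); split; first lra.
apply: ord4P; rewrite /nv /= ?mulr1 ?mulr0 //.
Qed.

Lemma nullrep0 (u : vec) : Lf u u = 0 ->
  (forall l, u l = 0) \/ exists p k, k != 0 /\ forall l, u l = k * nv p l.
Proof.
move=> H0.
have [Hp|Hn] := ltP 0 (u o0 + u o1).
  right; have [p [k [k0 Hk]]] := nullrep H0 Hp; exists p, k; split => //; exact: lt0r_neq0.
have [Hp|Hz] := ltP (u o0 + u o1) 0.
  right.
  have H1 : Lf (fun l => - u l) (fun l => - u l) = 0 by rewrite LfE -[RHS]H0 LfE; ring.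
  have [p [k [k0 Hk]]] := nullrep H1 ltac:(rewrite /=; lra).
  exists p, (- k); split; first by rewrite oppr_eq0 lt0r_neq0.
  by move=> l; rewrite mulNr -Hk opprK.
have Hs : u o0 + u o1 = 0 by lra.
move: H0; rewrite LfE => H0.
have Hq : u o0 * u o1 = u o2 ^+ 2 + u o3 ^+ 2 by lra.
have E : u o1 = - u o0 by lra.
rewrite E mulrN in Hq.
have S0 := sqr_ge0 (u o0). have S1 := sqr_ge0 (u o2). have S2 := sqr_ge0 (u o3).
have u0 : u o0 = 0 by apply/eqP; rewrite -sqrf_eq0; apply/eqP; rewrite expr2; lra.
have u2 : u o2 = 0 by apply/eqP; rewrite -sqrf_eq0; apply/eqP; rewrite expr2 in Hq S0 *; lra.
have u3 : u o3 = 0 by apply/eqP; rewrite -sqrf_eq0; apply/eqP; rewrite expr2 in Hq S0 *; lra.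
left; apply: ord4P => //. by rewrite E u0 oppr0.
Qed.

Definition uvec (w w' : vec) : vec := fun l => w l + w' l.

Lemma Luu (w w' : vec) : Lf w w = 2 -> Lf w' w' = 2 -> Lf w w' = -2 -> Lf (uvec w w') (uvec w w') = 0.
Proof.
move=> H1 H2 H3.
have -> : Lf (uvec w w') (uvec w w') = Lf w w + 2 * Lf w w' + Lf w' w' by rewrite /uvec !LfE; ring.
rewrite H1 H2 H3; ring.
Qed.

Lemma pairG2 (w w' : vec) : Lf w w = 2 -> Lf w' w' = 2 -> Lf w w' = -2 ->
  0 < (w o0 + w' o0) + (w o1 + w' o1) ->
  exists p, [/\ Ov w p, Ov w' p, (forall q, Ov w q -> Ov w' q -> q = p) &
     forall x, ~ (0 < Fw w x /\ 0 < Fw w' x)].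
Proof.
move=> H1 H2 H3 Hf.
have [p [k [k0 Hk]]] := nullrep (Luu H1 H2 H3) Hf.
have kn0 : k != 0 by rewrite lt0r_neq0.
have Lu : forall y, Lf y (uvec w w') = k * Lf y (nv p) by move=> y; apply: Lf_scaler.
have Ow : Ov w p.
  have := Lu w. rewrite /uvec LfC Lf_addl (LfC w' w) H1 H3 addrN => /esym/eqP.
  by rewrite mulf_eq0 (negbTE kn0) /= => /eqP.
have Ow' : Ov w' p.
  have := Lu w'. rewrite /uvec LfC Lf_addl H2 H3 addNr => /esym/eqP.
  by rewrite mulf_eq0 (negbTE kn0) /= => /eqP.
exists p; split => //.
- move=> q Oq Oq'. symmetry; apply: Lnv.
  have : Lf (nv q) (uvec w w') = 0 by rewrite /uvec (LfC _ (fun l => _)) Lf_addl Oq Oq' addr0.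
  rewrite Lu => /eqP; rewrite mulf_eq0 (negbTE kn0) /= => /eqP. by rewrite LfC.
- move=> x [F1 F2].
  have : 0 < Lf (nv (Some x)) (uvec w w').
    rewrite /uvec (LfC _ (fun l => _)) Lf_addl. exact: addr_gt0.
  rewrite Lu (LfC _ (nv p)). have Hle := Lnv_le p x.
  have : k * Lf (nv p) (nv (Some x)) <= 0 by rewrite pmulr_rle0.
  move=> A B. have := lt_le_trans B A. by rewrite ltxx.
Qed.

End G2.

Section G3.
Variable R : realType.
Local Notation vec := (vec R).

Lemma prop_tan (w w' : vec) q : Lf w w = 2 -> Lf w' w' = 2 -> Lf w w' = -2 ->
  ~ (forall l, uvec w w' l = 0) -> Ov w q -> Ov w' q ->
  exists k, k != 0 /\ forall l, uvec w w' l = k * nv q l.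
Proof.
move=> H1 H2 H3 Hn Oq Oq'.
case: (nullrep0 (Luu H1 H2 H3)) => [//|[p [k [kn0 Hk]]]].
exists k; split => //.
suff -> : q = p by [].
apply: Lnv.
have : Lf (nv q) (uvec w w') = 0.
  by rewrite /uvec (LfC _ (fun l => _)) Lf_addl Oq Oq' addr0.
rewrite (Lf_scaler _ Hk) => /eqP; rewrite mulf_eq0 (negbTE kn0) /= => /eqP. done.
Qed.

Lemma Fdiff1 (v : vec) c1 c2 r :
  Fw v (c1 + r, c2) - Fw v (c1 - r, c2) = 4 * r * (v o2 - v o1 * c1).
Proof. rewrite !FwE /=; ring. Qed.
Lemma Fdiff2 (v : vec) c1 c2 r :
  Fw v (c1, c2 + r) - Fw v (c1, c2 - r) = 4 * r * (v o3 - v o1 * c2).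
Proof. rewrite !FwE /=; ring. Qed.
Lemma Fsum1 (v : vec) c1 c2 r :
  Fw v (c1 + r, c2) + Fw v (c1 - r, c2) =
  - 2 * v o0 - 2 * v o1 * (c1 ^+ 2 + c2 ^+ 2 + r ^+ 2) + 4 * (v o2 * c1 + v o3 * c2).
Proof. rewrite !FwE /=; ring. Qed.

Lemma samecirc (w w' : vec) : Lf w w = 2 -> Lf w' w' = 2 ->
  (forall p, Ov w p -> Ov w' p) ->
  exists k, (k = 1 \/ k = -1) /\ forall l, w' l = k * w l.
Proof.
move=> H1 H2 Hs.
suff [k Hk] : exists k, forall l, w' l = k * w l.
  exists k; split => //.
  have : Lf w' w' = k ^+ 2 * Lf w w.
    by rewrite (Lf_scale _ Hk) (Lf_scaler _ Hk); ring.
  rewrite H1 H2 => /eqP. rewrite -subr_eq0.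
  have -> : 2 - k ^+ 2 * 2 = - 2 * ((k - 1) * (k + 1)) :> R by ring.
  rewrite mulf_eq0 /= mulf_eq0 subr_eq0 => /orP[|/orP[/eqP ->|]]; first by rewrite oppr_eq0 pnatr_eq0.
  - by left.
  - by rewrite addr_eq0 => /eqP ->; right.
move: H1 H2; rewrite !LfE => H1 H2.
have [w1z|w1n] := eqVneq (w o1) 0.
  have w1' : w' o1 = 0 by apply/OvNone/Hs/OvNone.
  have Hh : w o2 ^+ 2 + w o3 ^+ 2 = 1 by rewrite w1z in H1; rewrite !expr2; lra.
  pose x0 := (w o0 / 2 * w o2, w o0 / 2 * w o3).
  pose x1 := (w o0 / 2 * w o2 - w o3, w o0 / 2 * w o3 + w o2).
  have O0 : Ov w (Some x0).
    rewrite OvSome FwE /= w1z.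
    transitivity (w o0 * (w o2 ^+ 2 + w o3 ^+ 2 - 1)); first by field.
    by rewrite Hh subrr mulr0.
  have O1 : Ov w (Some x1).
    rewrite OvSome FwE /= w1z.
    transitivity (w o0 * (w o2 ^+ 2 + w o3 ^+ 2 - 1)); first by field.
    by rewrite Hh subrr mulr0.
  have := Hs _ O0; have := Hs _ O1; rewrite !OvSome !FwE /= w1' => E1 E0.
  pose k := w' o2 * w o2 + w' o3 * w o3.
  have Hb : - w' o2 * w o3 + w' o3 * w o2 = 0.
    have : - (w' o0 + 0 * ((w o0 / 2 * w o2 - w o3) ^+ 2 + (w o0 / 2 * w o3 + w o2) ^+ 2)) +
         2 * (w' o2 * (w o0 / 2 * w o2 - w o3) + w' o3 * (w o0 / 2 * w o3 + w o2))
      - (- (w' o0 + 0 * ((w o0 / 2 * w o2) ^+ 2 + (w o0 / 2 * w o3) ^+ 2)) +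
         2 * (w' o2 * (w o0 / 2 * w o2) + w' o3 * (w o0 / 2 * w o3))) = 0.
      by rewrite E1 E0 subrr.
    move=> H. transitivity ((- (w' o0 + 0 * ((w o0 / 2 * w o2 - w o3) ^+ 2 + (w o0 / 2 * w o3 + w o2) ^+ 2)) +
         2 * (w' o2 * (w o0 / 2 * w o2 - w o3) + w' o3 * (w o0 / 2 * w o3 + w o2))
      - (- (w' o0 + 0 * ((w o0 / 2 * w o2) ^+ 2 + (w o0 / 2 * w o3) ^+ 2)) +
         2 * (w' o2 * (w o0 / 2 * w o2) + w' o3 * (w o0 / 2 * w o3)))) / 2).
      by field.
    by rewrite H mul0r.
  exists k; apply: ord4P.
  - transitivity (- (w' o0 + 0 * ((w o0 / 2 * w o2) ^+ 2 + (w o0 / 2 * w o3) ^+ 2)) +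
         2 * (w' o2 * (w o0 / 2 * w o2) + w' o3 * (w o0 / 2 * w o3)) + w' o0).
      by rewrite E0 add0r.
    rewrite /k; by field.
  - by rewrite w1' w1z mulr0.
  - transitivity (k * w o2 - (- w' o2 * w o3 + w' o3 * w o2) * w o3 + w' o2 * (1 - (w o2 ^+ 2 + w o3 ^+ 2))).
      rewrite /k; ring.
    by rewrite Hb Hh subrr mulr0 addr0 mul0r subr0.
  - transitivity (k * w o3 + (- w' o2 * w o3 + w' o3 * w o2) * w o2 + w' o3 * (1 - (w o2 ^+ 2 + w o3 ^+ 2))).
      rewrite /k; ring.
    by rewrite Hb Hh subrr mulr0 addr0 mul0r addr0.
pose c1 := w o2 / w o1; pose c2 := w o3 / w o1; pose r := (w o1)^-1.
have E : w o0 = (w o2 ^+ 2 + w o3 ^+ 2 - 1) / w o1.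
  apply: (mulIf w1n). rewrite mulfVK //. rewrite !expr2. lra.
have OnW : forall e1 e2, e1 ^+ 2 + e2 ^+ 2 = 1 -> Ov w (Some (c1 + r * e1, c2 + r * e2)).
  move=> e1 e2 He. rewrite OvSome FwE /= /c1 /c2 /r E.
  transitivity ((w o2 ^+ 2 + w o3 ^+ 2) * (1 - 1) / w o1 + (1 - (e1 ^+ 2 + e2 ^+ 2)) / w o1).
    by field.
  by rewrite He !subrr mulr0 !mul0r addr0.
have P1 := Hs _ (OnW 1 0 ltac:(by rewrite expr1n expr0n addr0)).
have P2 := Hs _ (OnW (-1) 0 ltac:(by rewrite sqrrN expr1n expr0n addr0)).
have P3 := Hs _ (OnW 0 1 ltac:(by rewrite expr1n expr0n add0r)).
have P4 := Hs _ (OnW 0 (-1) ltac:(by rewrite sqrrN expr1n expr0n add0r)).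
move: P1 P2 P3 P4. rewrite !OvSome !mulr0 !addr0 !mulr1 !mulrN1 => P1 P2 P3 P4.
have D1 := @Fdiff1 w' c1 c2 r. rewrite P1 P2 subrr in D1.
have D2 := @Fdiff2 w' c1 c2 r. rewrite P3 P4 subrr in D2.
have S1 := @Fsum1 w' c1 c2 r. rewrite P1 P2 addr0 in S1.
have rn0 : r != 0 by rewrite invr_eq0.
have A2 : w' o2 = w' o1 * c1.
  have : 4 * r * (w' o2 - w' o1 * c1) = 0 by rewrite -D1.
  by move/eqP; rewrite !mulf_eq0 (negbTE rn0) pnatr_eq0 /= subr_eq0 => /eqP.
have A3 : w' o3 = w' o1 * c2.
  have : 4 * r * (w' o3 - w' o1 * c2) = 0 by rewrite -D2.
  by move/eqP; rewrite !mulf_eq0 (negbTE rn0) pnatr_eq0 /= subr_eq0 => /eqP.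
exists (w' o1 / w o1); apply: ord4P.
- have A0 : w' o0 = w' o1 * (c1 ^+ 2 + c2 ^+ 2 - r ^+ 2).
    move: S1; rewrite A2 A3 => S1.
    transitivity ((- 2 * w' o0 - 2 * w' o1 * (c1 ^+ 2 + c2 ^+ 2 + r ^+ 2) +
      4 * (w' o1 * c1 * c1 + w' o1 * c2 * c2)) / (-2) + w' o1 * (c1 ^+ 2 + c2 ^+ 2 - r ^+ 2)).
      by field.
    by rewrite -S1 mul0r add0r.
  rewrite A0 E /c1 /c2 /r. by field.
- by rewrite divfK.
- by rewrite A2 /c1; field.
- by rewrite A3 /c2; field.
Qed.

End G3.

Section C.
Variable R : realType.
Local Notation vec := (vec R).
Implicit Types C : ocircle R.

Lemma wvec_rev C l : wvec (reverse C) l = - wvec C l.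
Proof.
move: l; apply: ord4P; case: C => [c r|h m]; by rewrite /wvec /= ?invrN ?sqrrN ?mulrN ?oppr0.
Qed.

Lemma wf_rev C : wf_ocircle (reverse C) <-> wf_ocircle C.
Proof. case: C => [c r|h m] /=; first by rewrite oppr_eq0. by rewrite !sqrrN. Qed.

Lemma on_rev C p : on_circle (reverse C) p <-> on_circle C p.
Proof.
case: C => [c r|h m]; case: p => [x|] //=; first by rewrite sqrrN.
split => E.
- by rewrite -[m]opprK -E; ring.
- by rewrite -E; ring.
Qed.

Lemma rev_rev C : reverse (reverse C) = C.
Proof. case: C => [c r|[h1 h2] m] /=; by rewrite ?opprK. Qed.

Lemma wvec_inj C C' : wf_ocircle C -> wf_ocircle C' -> (forall l, wvec C l = wvec C' l) -> C = C'.
Proof.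
case: C => [[c1 c2] r|[h1 h2] m]; case: C' => [[c1' c2'] r'|[h1' h2'] m'] /= H H' E.
- have E1 := E o1; have E2 := E o2; have E3 := E o3; rewrite /wvec /= in E1 E2 E3.
  have Er : r = r' by apply: invr_inj.
  rewrite -Er in E2 E3.
  have rn : r^-1 != 0 by rewrite invr_eq0.
  by rewrite Er (mulIf rn E2) (mulIf rn E3).
- have E1 := E o1; rewrite /wvec /= in E1. by move: H; rewrite -invr_eq0 E1 eqxx.
- have E1 := E o1; rewrite /wvec /= in E1. by move: H'; rewrite -invr_eq0 -E1 eqxx.
- have E0 := E o0; have E2 := E o2; have E3 := E o3; rewrite /wvec /= in E0 E2 E3.
  rewrite E2 E3. congr OLine. apply: (mulrI (x:=2)); last done. by rewrite unitfE pnatr_eq0.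
Qed.

Lemma wvec_ex (x : vec) : Lf x x = 2 -> exists C, wf_ocircle C /\ forall l, wvec C l = x l.
Proof.
rewrite LfE => H.
have [x1z|x1n] := eqVneq (x o1) 0.
  exists (OLine (x o2, x o3) (x o0 / 2)); split.
    rewrite /= !expr2. rewrite x1z in H. lra.
  apply: ord4P; rewrite /wvec //=.
  + by rewrite mulrC divfK // pnatr_eq0.
exists (OCirc (x o2 / x o1, x o3 / x o1) (x o1)^-1); split; first by rewrite /= invr_eq0.
have E : x o0 = (x o2 ^+ 2 + x o3 ^+ 2 - 1) / x o1.
  apply: (mulIf x1n). rewrite divfK //. rewrite !expr2. lra.
apply: ord4P; rewrite /wvec /= ?invrK.
- rewrite E. by field.
- done.
- by rewrite divfK.
- by rewrite divfK.
Qed.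

Lemma same_circ_k C C' : wf_ocircle C -> wf_ocircle C' -> same_circle C C' ->
  exists k, (k = 1 \/ k = -1) /\ forall l, wvec C' l = k * wvec C l.
Proof.
move=> H H' S. apply: samecirc; try exact: wf_Lf.
move=> p Op. apply/(on_Lf _ H'). apply/S. exact/(on_Lf _ H).
Qed.

Lemma k_same_circ C C' k : wf_ocircle C -> wf_ocircle C' -> k != 0 ->
  (forall l, wvec C' l = k * wvec C l) -> same_circle C C'.
Proof.
move=> H H' kn Hk p. rewrite (on_Lf _ H) (on_Lf _ H') (Lf_scale _ Hk).
split => [->|/eqP]; first by rewrite mulr0.
by rewrite mulf_eq0 (negbTE kn) => /eqP.
Qed.

Lemma tangent_Ov C C' p : wf_ocircle C -> wf_ocircle C' ->
  tangent_at C C' p <->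
  [/\ Ov (wvec C) p, Ov (wvec C') p & forall q, Ov (wvec C) q -> Ov (wvec C') q -> q = p].
Proof.
move=> H H'; split.
- case=> O O' U; split; [exact/(on_Lf _ H)|exact/(on_Lf _ H')|].
  move=> q Oq Oq'; apply: U; [exact/(on_Lf _ H)|exact/(on_Lf _ H')].
- case=> O O' U; split; [exact/(on_Lf _ H)|exact/(on_Lf _ H')|].
  move=> q Oq Oq'; apply: U; [exact/(on_Lf _ H)|exact/(on_Lf _ H')].
Qed.

Lemma disj_Fw C C' : wf_ocircle C -> wf_ocircle C' ->
  (forall x, ~ (ointerior C x /\ ointerior C' x)) <->
  (forall x, ~ (0 < Fw (wvec C) x /\ 0 < Fw (wvec C') x)).
Proof.
move=> H H'; split => D x [A B]; apply: (D x); split.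
- exact/(int_Lf _ H).
- exact/(int_Lf _ H').
- exact/(int_Lf _ H).
- exact/(int_Lf _ H').
Qed.

End C.

Section Cfg.
Variable R : realType.
Local Notation vec := (vec R).
Implicit Types E : config R.

Definition wr E i : vec := wvec (E i).
Definition gram E := forall a b, Lf (wr E a) (wr E b) = if a == b then 2 else -2.
Definition fut (u : vec) := 0 < u o0 + u o1.
Definition good_pos E := [/\ forall i, wf_ocircle (E i), gram E &
  forall a b, a != b -> fut (uvec (wr E a) (wr E b))].
Definition revc E : config R := fun i => reverse (E i).

Lemma good_of_desc E : descartes E -> pos_oriented E -> good_pos E.
Proof.
case=> Hwf Ht Hd Hp.
have P : forall a b, a != b -> Lf (wr E a) (wr E b) = -2 /\ fut (uvec (wr E a) (wr E b)).
  move=> a b ab. have [p Tp] := Ht a b ab.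
  move/(tangent_Ov _ (Hwf a) (Hwf b)): Tp => [O O' U].
  apply: (pairG1 (wf_Lf (Hwf a)) (wf_Lf (Hwf b)) O O' U).
  exact/(disj_Fw (Hwf a) (Hwf b))/(Hp a b ab).
split => //.
- move=> a b; case: eqP => [->|/eqP ab]; first exact: wf_Lf.
  by case: (P a b ab).
- by move=> a b ab; case: (P a b ab).
Qed.

Lemma gram_u E a b c : gram E ->
  Lf (uvec (wr E a) (wr E b)) (wr E c) = (if a == c then 2 else -2) + (if b == c then 2 else -2).
Proof. by move=> G; rewrite Lf_addl !G. Qed.

Lemma fut_nz (u : vec) : fut u -> ~ (forall l, u l = 0).
Proof. rewrite /fut => H Z. move: H; rewrite !Z addr0 ltxx. done. Qed.

Lemma pick_c (i j k l : 'I_4) : (i < j)%N -> (k < l)%N -> (i, j) != (k, l) ->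
  exists c, [/\ (c == i) || (c == j), c != k & c != l].
Proof.
move=> ij kl ne.
case: (boolP ((i != k) && (i != l))) => [/andP[ik il]|H1].
  by exists i; rewrite eqxx.
case: (boolP ((j != k) && (j != l))) => [/andP[jk jl]|H2].
  by exists j; rewrite eqxx orbT.
exfalso. rewrite negb_and !negbK in H1. rewrite negb_and !negbK in H2.
move: H1 H2 => /orP[/eqP ik|/eqP ik] /orP[/eqP jk|/eqP jk].
- by move: ij; rewrite ik jk ltnn.
- by move: ne; rewrite ik jk eqxx.
- by move: ij kl; rewrite ik jk => a b; move: (ltn_trans a b); rewrite ltnn.
- by move: ij; rewrite ik jk ltnn.
Qed.

Lemma desc_of_good E : good_pos E -> descartes E /\ pos_oriented E.
Proof.
case=> Hwf G F.
have P : forall a b, a != b -> exists p, [/\ Ov (wr E a) p, Ov (wr E b) p,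
     (forall q, Ov (wr E a) q -> Ov (wr E b) q -> q = p) &
     forall x, ~ (0 < Fw (wr E a) x /\ 0 < Fw (wr E b) x)].
  move=> a b ab. apply: pairG2; rewrite ?G ?eqxx ?(negbTE ab) //.
  exact: F.
split; last first.
  move=> a b ab. have [p [_ _ _ D]] := P a b ab. exact/(disj_Fw (Hwf a) (Hwf b)).
split => //.
- move=> a b ab; have [p [O O' U _]] := P a b ab. exists p. exact/(tangent_Ov _ (Hwf a) (Hwf b)).
- move=> i j k l ij kl ne p q Tp Tq epq. subst q.
  have ij' : i != j by rewrite neq_ltn ij.
  have kl' : k != l by rewrite neq_ltn kl.
  move/(tangent_Ov _ (Hwf i) (Hwf j)): Tp => [O1 O2 _].
  move/(tangent_Ov _ (Hwf k) (Hwf l)): Tq => [O3 O4 _].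
  have Gd : forall a, Lf (wr E a) (wr E a) = 2 by move=> a; rewrite G eqxx.
  have Go : forall a b, a != b -> Lf (wr E a) (wr E b) = -2 by move=> a b ab; rewrite G (negbTE ab).
  have [lam [ln Hl]] := prop_tan (Gd i) (Gd j) (Go i j ij') (fut_nz (F _ _ ij')) O1 O2.
  have [mu [mn Hm]] := prop_tan (Gd k) (Gd l) (Go k l kl') (fut_nz (F _ _ kl')) O3 O4.
  have [c [c1 c2 c3]] := pick_c ij kl ne.
  have A : Lf (uvec (wr E i) (wr E j)) (wr E c) = 0.
    rewrite gram_u //. case/orP: c1 => /eqP ->; rewrite eqxx ?(negbTE ij') 1?eq_sym ?(negbTE ij'); ring.
  have B : Lf (uvec (wr E k) (wr E l)) (wr E c) = -4.
    rewrite gram_u // eq_sym (negbTE c2) eq_sym (negbTE c3). ring.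
  rewrite (Lf_scale _ Hl) in A. rewrite (Lf_scale _ Hm) in B.
  move/eqP: A; rewrite mulf_eq0 (negbTE ln) /= => /eqP A.
  by move: B; rewrite A mulr0 => /eqP; rewrite eq_sym oppr_eq0 pnatr_eq0.
Qed.

Lemma tangent_rev (C C' : ocircle R) p : tangent_at (reverse C) (reverse C') p <-> tangent_at C C' p.
Proof.
split; case=> A B U; split; try exact/on_rev.
- move=> q Q Q'; apply: U; exact/on_rev.
- move=> q Q Q'; apply: U; exact/on_rev.
Qed.

Lemma desc_revc E : descartes (revc E) <-> descartes E.
Proof.
rewrite /revc; split; case=> W T D; split.
- by move=> i; apply/wf_rev.
- by move=> i j ij; have [p Tp] := T i j ij; exists p; apply/tangent_rev.
- move=> i j k l ij kl ne p q Tp Tq; apply: (D i j k l ij kl ne); exact/tangent_rev.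
- by move=> i; apply/wf_rev.
- by move=> i j ij; have [p Tp] := T i j ij; exists p; apply/tangent_rev.
- move=> i j k l ij kl ne p q Tp Tq; apply: (D i j k l ij kl ne); exact/tangent_rev.
Qed.

Lemma od_good E : oriented_descartes E <-> good_pos E \/ good_pos (revc E).
Proof.
split.
- case=> D [P|P]; [left|right]; apply: good_of_desc => //.
  exact/desc_revc.
- case=> Hg.
  + by have [D P] := desc_of_good Hg; split => //; left.
  + have [D P] := desc_of_good Hg; split; [exact/desc_revc|by right].
Qed.

Lemma wr_revc E i l : wr (revc E) i l = - wr E i l.
Proof. exact: wvec_rev. Qed.

Lemma gram_revc E : gram (revc E) -> gram E.
Proof.
move=> G a b; rewrite -G.
have H : forall i l, wr (revc E) i l = (-1) * wr E i l by move=> i l; rewrite wr_revc mulN1r.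
by rewrite (Lf_scale _ (H a)) (Lf_scaler _ (H b)) mulN1r mulN1r opprK.
Qed.

Lemma od_gram E : oriented_descartes E -> gram E.
Proof. by case/od_good => [[]|[_ /gram_revc]]. Qed.

Lemma od_wf E : oriented_descartes E -> forall i, wf_ocircle (E i).
Proof. by case=> [[]]. Qed.

End Cfg.

Section Mx.
Variable R : realType.
Local Notation vec := (vec R).
Implicit Types E : config R.

Lemma WmatE E a l : Wmat E a l = wr E a l.
Proof. by rewrite mxE. Qed.

Definition Lm : 'M[R]_4 := \matrix_(i, j)
  nth 0 (nth [::] [:: [:: 0; -1; 0; 0]; [:: -1; 0; 0; 0]; [:: 0; 0; 2; 0]; [:: 0; 0; 0; 2]] i) j.

Lemma WLW E a b : (Wmat E *m Lm *m (Wmat E)^T) a b = Lf (wr E a) (wr E b).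
Proof.
rewrite !mxE sum4 !mxE !sum4 !mxE /= LfE /wr. ring.
Qed.

Definition G0i : 'M[R]_4 := \matrix_(i, j) ((i == j)%:R / 4 - 1 / 8).

Lemma W_right E : gram E -> Wmat E *m (Lm *m (Wmat E)^T *m G0i) = 1%:M.
Proof.
move=> G. rewrite !mulmxA. apply/matrixP => a b.
rewrite mxE sum4 !WLW !G !mxE.
move: a b; apply: ord4P; apply: ord4P; rewrite /=; by field.
Qed.

Lemma W_unit E : gram E -> Wmat E \in unitmx.
Proof. by move/W_right/mulmx1_unit => []. Qed.

Lemma span4 E : gram E -> forall y : vec, exists c : 'I_4 -> R,
  forall l, y l = \sum_k c k * wr E k l.
Proof.
move=> G y. have H := mulmx1C (W_right G).
set M := Lm *m _ *m G0i in H.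
pose yr : 'rV[R]_4 := \row_l y l.
exists (fun k => (yr *m M) ord0 k) => l.
have : yr = yr *m M *m Wmat E by rewrite -mulmxA H mulmx1.
move/matrixP => /(_ ord0 l). rewrite [in LHS]mxE => ->.
rewrite mxE; apply: eq_bigr => k _; by rewrite WmatE.
Qed.

Lemma Sgen_mul (i : 'I_4) (M : 'M[R]_4) a c :
  (Sgen R i *m M) a c = if a == i then 2 * (\sum_k M k c) - 3 * M i c else M a c.
Proof.
rewrite mxE. case: eqP => [->|/eqP ai].
- rewrite (bigD1 i) //= [in RHS](bigD1 i) //= !mxE !eqxx.
  under eq_bigr => k /negbTE ki do rewrite mxE eqxx ki.
  rewrite -mulr_sumr. ring.
- rewrite (bigD1 a) //= mxE (negbTE ai) eqxx mul1r big1 ?addr0 // => k ka.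
  by rewrite mxE (negbTE ai) eq_sym (negbTE ka) mul0r.
Qed.

Lemma Sgen_sq (i : 'I_4) : Sgen R i *m Sgen R i = 1%:M :> 'M[R]_4.
Proof.
apply/matrixP => a c; rewrite !mxE sum4 !mxE.
move: i a c; apply: ord4P; apply: ord4P; apply: ord4P; rewrite /=; ring.
Qed.

Lemma invmx_Sgen (i : 'I_4) : invmx (Sgen R i) = Sgen R i :> 'M[R]_4.
Proof.
have U : Sgen R i \in unitmx by case: (mulmx1_unit (Sgen_sq i)).
by rewrite -[RHS]mul1mx -(mulVmx U) -mulmxA Sgen_sq mulmx1.
Qed.

Lemma apo_ind (P : 'M[R]_4 -> Prop) U : in_apollonian U -> P 1%:M ->
  (forall i U, in_apollonian U -> P U -> P (Sgen R i *m U)) -> P U.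
Proof.
move=> HU P1 PS; elim: HU => [//|i U0 H0 IH|i U0 H0 IH]; last rewrite invmx_Sgen; exact: PS.
Qed.

Lemma apoS_ (i : 'I_4) U : in_apollonian U -> in_apollonian (Sgen R i *m U).
Proof. exact: apoS. Qed.

Definition sgb (b : bool) : R := if b then -1 else 1.
Definition psm (s : {perm 'I_4}) (b : bool) : 'M[R]_4 :=
  \matrix_(i, k) (sgb b * (s i == k)%:R).

Lemma psm_mul s b (M : 'M[R]_4) a c : (psm s b *m M) a c = sgb b * M (s a) c.
Proof.
rewrite mxE (bigD1 (s a)) //= mxE eqxx mulr1 big1 ?addr0 // => k ka.
by rewrite mxE eq_sym (negbTE ka) mulr0 mul0r.
Qed.

Lemma mul_psm s b (M : 'M[R]_4) a c : (M *m psm s b) a c = sgb b * M a ((s^-1)%g c).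
Proof.
rewrite mxE (bigD1 ((s^-1)%g c)) //= mxE permKV eqxx mulr1 big1 ?addr0; first by rewrite mulrC.
move=> k ka. rewrite mxE (canF_eq (permK s)) (negbTE ka). by rewrite mulr0 mulr0.
Qed.

Lemma Sgen_psm (i : 'I_4) s b : Sgen R i *m psm s b = psm s b *m Sgen R (s i).
Proof.
apply/matrixP => a c; rewrite mul_psm psm_mul !mxE.
by rewrite (inj_eq (@perm_inj _ s)) (canF_eq (permKV s)) (canF_eq (permK s)).
Qed.

Lemma apo_psm s b U : in_apollonian U ->
  exists U', in_apollonian U' /\ U *m psm s b = psm s b *m U'.
Proof.
move=> HU; apply: (@apo_ind (fun U => exists U', in_apollonian U' /\ U *m psm s b = psm s b *m U') U HU).
- exists 1%:M; split; first exact: apo1. by rewrite mul1mx mulmx1.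
- move=> i U0 _ [U' [H' E']]. exists (Sgen R (s i) *m U'); split; first exact: apoS_.
  by rewrite -mulmxA E' !mulmxA Sgen_psm.
Qed.

Lemma psm_apo s b U : in_apollonian U ->
  exists U', in_apollonian U' /\ psm s b *m U = U' *m psm s b.
Proof.
move=> HU; apply: (@apo_ind (fun U => exists U', in_apollonian U' /\ psm s b *m U = U' *m psm s b) U HU).
- exists 1%:M; split; first exact: apo1. by rewrite mul1mx mulmx1.
- move=> i U0 _ [U' [H' E']]. exists (Sgen R ((s^-1)%g i) *m U'); split; first exact: apoS_.
  have K : psm s b *m Sgen R i = Sgen R ((s^-1)%g i) *m psm s b by rewrite Sgen_psm permKV.
  by rewrite mulmxA K -mulmxA E' mulmxA.
Qed.

End Mx.

Section Mod4.
Variable R : realType.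
Local Notation psm := (psm R).

Definition good4 (U : 'M[R]_4) := exists (v : 'I_4 -> int) (z : 'I_4 -> 'I_4 -> int),
  forall a c, U a c = ((a == c)%:Z + 2 * v a + 4 * z a c)%:~R.

Lemma sum_delta (c : 'I_4) : \sum_(k < 4) ((k == c)%:R : R) = 1.
Proof. by rewrite (bigD1 c) //= eqxx big1 ?addr0 // => k /negbTE ->. Qed.

Lemma intr_sum (F : 'I_4 -> int) : (\sum_k F k)%:~R = \sum_k ((F k)%:~R : R).
Proof.
apply: (big_ind2 (fun (x : int) (y : R) => x%:~R = y)) => //.
by move=> x1 x2 y1 y2 <- <-; rewrite intrD.
Qed.

Lemma apo_good4 U : in_apollonian U -> good4 U.
Proof.
move=> HU; apply: (@apo_ind R good4 U HU).
- exists (fun _ => 0), (fun _ _ => 0) => a c. by rewrite !mulr0 !addr0 mxE.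
- move=> i U0 _ [v [z H]].
  exists (fun a => if a == i then 1 - v a else v a).
  exists (fun a c => if a == i then (\sum_k v k) + 2 * (\sum_k z k c) - (i == c)%:Z - v i - 3 * z i c
                  else z a c) => a c.
  rewrite Sgen_mul. case: eqP => [->|_]; last exact: H.
  under eq_bigr => k _ do rewrite H !intrD !intrM.
  rewrite H !intrD !intrM !intrB !intrD !intrM !intr_sum.
  rewrite big_split big_split /= -!mulr_sumr.
  have -> : \sum_(i0 < 4) (((i0 == c)%:Z)%:~R : R) = 1 by exact: sum_delta.
  ring.
Qed.

Definition sgi (b : bool) : int := if b then -1 else 1.
Lemma sgbE b : sgb R b = (sgi b)%:~R.
Proof. by case: b. Qed.

Lemma psm_inj (U1 U2 : 'M[R]_4) s1 b1 s2 b2 : in_apollonian U1 -> in_apollonian U2 ->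
  U1 *m psm s1 b1 = U2 *m psm s2 b2 -> s1 = s2 /\ b1 = b2.
Proof.
move=> H1 H2 E.
have [v1 [z1 G1]] := apo_good4 H1. have [v2 [z2 G2]] := apo_good4 H2.
have K : forall a c, sgi b1 * ((a == (s1^-1)%g c)%:Z + 2 * v1 a + 4 * z1 a ((s1^-1)%g c)) =
                     sgi b2 * ((a == (s2^-1)%g c)%:Z + 2 * v2 a + 4 * z2 a ((s2^-1)%g c)).
  move=> a c. apply: (@intr_inj R). rewrite !intrM -!sgbE -G1 -G2 -!mul_psm. by rewrite E.
have Hs : s1 = s2.
  apply/permP => a. have := K a (s1 a). rewrite permK eqxx.
  case: eqP => [Ea|Na]; first by move=> _; rewrite {2}Ea permKV.
  move=> Hk; exfalso. clear -Hk. case: b1 b2 Hk => [] [] /= Hk; lia.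
subst s2. split => //.
have K1 := K o0 (s1 o0). have K2 := K o0 (s1 o1). rewrite !permK /= in K1 K2.
clear -K1 K2. case: b1 b2 K1 K2 => [] [] //= K1 K2; lia.
Qed.

End Mod4.

Section Rep.
Variable R : realType.
Local Notation vec := (vec R).
Local Notation psm := (psm R).
Local Notation Sg := (Sgen R).
Implicit Types E : config R.

Lemma Lf_sum (c : 'I_4 -> R) (f : 'I_4 -> vec) (y : vec) :
  Lf (fun l => \sum_k c k * f k l) y = \sum_k c k * Lf (f k) y.
Proof. rewrite !sum4 !LfE !sum4; ring. Qed.

Lemma sum_if (f : 'I_4 -> R) (i : 'I_4) a b :
  \sum_k (if k == i then a else b) * f k = b * \sum_k f k + (a - b) * f i.
Proof. rewrite !sum4; move: i; apply: ord4P; rewrite /=; ring. Qed.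

Lemma sum_if1 (i : 'I_4) a b :
  \sum_(k < 4) (if k == i then a else b) = 3 * b + a :> R.
Proof. rewrite !sum4; move: i; apply: ord4P; rewrite /=; ring. Qed.

Lemma pick3 (i j : 'I_4) : exists k, (k != i) && (k != j).
Proof.
move: i j; apply: ord4P; apply: ord4P;
  first [by exists o0 | by exists o1 | by exists o2 | by exists o3].
Qed.

Lemma Lnv_le2 (p q : xpoint R) : Lf (nv p) (nv q) <= 0.
Proof.
case: q => [x|]; first exact: Lnv_le.
case: p => [x|]; rewrite LfE /nv /=; lra.
Qed.

Lemma nv_fut (p : xpoint R) : 0 < nv p o0 + nv p o1.
Proof.
case: p => [x|]; rewrite /nv /=; last lra.
have := sqr_ge0 x.1; have := sqr_ge0 x.2; lra.
Qed.

Lemma cone (x u : vec) : Lf x x = 0 -> Lf u u = 0 -> fut u -> Lf x u < 0 -> fut x.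
Proof.
move=> Hx Hu Fu Hxu.
have [p [k [k0 Hk]]] := nullrep Hu Fu.
case: (nullrep0 Hx) => [Z|[q [m [m0 Hm]]]].
  exfalso; move: Hxu; rewrite LfE !Z; lra.
move: Hxu; rewrite (Lf_scale _ Hm) (Lf_scaler _ Hk) => H.
have Hle := Lnv_le2 q p.
have mpos : 0 < m.
  rewrite ltNge; apply/negP => ml.
  have : 0 <= m * (k * Lf (nv q) (nv p)).
    by rewrite mulr_le0 // pmulr_rle0.
  by rewrite leNgt H.
rewrite /fut !Hm -mulrDr. apply: mulr_gt0 => //. exact: nv_fut.
Qed.

Lemma gram_nz E a b : gram E -> a != b -> ~ (forall l, uvec (wr E a) (wr E b) l = 0).
Proof.
move=> G ab Z. have [c /andP[ca cb]] := pick3 a b.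
have := gram_u a b c G. rewrite eq_sym (negbTE ca) eq_sym (negbTE cb).
rewrite LfE !Z => H. lra.
Qed.

Definition repv E i : vec := fun l => 2 * (\sum_k wr E k l) - 3 * wr E i l.

Lemma repvE E i l : repv E i l = \sum_k (if k == i then -1 else 2) * wr E k l.
Proof. rewrite sum_if /repv; ring. Qed.

Lemma Lrep E i j : gram E -> Lf (repv E i) (wr E j) = if i == j then -14 else -2.
Proof.
move=> G. rewrite (Lf_ext _ (repvE E i)) Lf_sum.
under eq_bigr => k _ do rewrite G.
rewrite sum4. move: i j; apply: ord4P; apply: ord4P; rewrite /=; ring.
Qed.

Lemma Lrep2 E i : gram E -> Lf (repv E i) (repv E i) = 2.
Proof.
move=> G. rewrite (Lf_ext _ (repvE E i)) Lf_sum.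
under eq_bigr => k _ do rewrite LfC Lrep //.
rewrite sum4. move: i; apply: ord4P; rewrite /=; ring.
Qed.

Lemma Lf_addr (w w' y : vec) : Lf y (uvec w w') = Lf y w + Lf y w'.
Proof. rewrite /uvec !LfE; ring. Qed.

Lemma fut_rep E i b : good_pos E -> b != i -> fut (uvec (repv E i) (wr E b)).
Proof.
case=> Hwf G F bi.
have [k /andP[ki kb]] := pick3 i b.
have Gd : forall a, Lf (wr E a) (wr E a) = 2 by move=> a; rewrite G eqxx.
have Go : forall a c, a != c -> Lf (wr E a) (wr E c) = -2 by move=> a c ac; rewrite G (negbTE ac).
have Hr : Lf (repv E i) (wr E b) = -2 by rewrite Lrep // eq_sym (negbTE bi).
have Hr' : Lf (repv E i) (wr E k) = -2 by rewrite Lrep // eq_sym (negbTE ki).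
apply: (@cone _ (uvec (wr E b) (wr E k))).
- exact: Luu (Lrep2 i G) (Gd b) Hr.
- apply: Luu; [exact: Gd|exact: Gd|apply: Go; by rewrite eq_sym].
- by apply: F; rewrite eq_sym.
- rewrite Lf_addl !Lf_addr Hr Hr' Gd Go; last by rewrite eq_sym.
  lra.
Qed.

Lemma fut_C (u v : vec) : fut (uvec u v) -> fut (uvec v u).
Proof. by rewrite /fut /uvec; lra. Qed.

Lemma rep_pos E i : good_pos E -> exists E' : config R,
  [/\ good_pos E', forall j, j != i -> E' j = E j & forall l, wr E' i l = repv E i l].
Proof.
move=> Hg; have Hg' := Hg; case: Hg' => Hwf G F.
have [C [HC Cw]] := wvec_ex (Lrep2 i G).
pose E' := fun j => if j == i then C else E j.
have W1 : forall l, wr E' i l = repv E i l by move=> l; rewrite /wr /E' eqxx Cw.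
have W2 : forall j, j != i -> wr E' j = wr E j by move=> j ji; rewrite /wr /E' (negbTE ji).
exists E'; split => //; last by move=> j ji; rewrite /E' (negbTE ji).
split.
- by move=> j; rewrite /E'; case: eqP.
- move=> a b.
  case: (eqVneq a i) => [->|ai]; case: (eqVneq b i) => [->|bi].
  + by rewrite (Lf_ext _ W1) (Lf_extr _ W1) Lrep2 // eqxx.
  + by rewrite (Lf_ext _ W1) W2 // Lrep // eq_sym (negbTE bi).
  + by rewrite LfC (Lf_ext _ W1) W2 // Lrep // eq_sym (negbTE ai).
  + by rewrite !W2 // G.
- move=> a b ab.
  case: (eqVneq a i) => [Ea|ai]; case: (eqVneq b i) => [Eb|bi].
  + by move: ab; rewrite Ea Eb eqxx.
  + rewrite Ea (W2 b bi) /fut /uvec !W1. by have := fut_rep Hg bi.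
  + rewrite Eb (W2 a ai) /fut /uvec !W1. by have := fut_C (fut_rep Hg ai).
  + by rewrite !W2 //; apply: F.
Qed.

Lemma coef_sol (c L : 'I_4 -> R) i :
  (forall j, L j = \sum_k c k * (if k == j then 2 else -2)) ->
  (forall j, j != i -> L j = -2) ->
  \sum_j c j * L j = 2 ->
  (forall j, c j = if j == i then 1 else 0) \/ (forall j, c j = if j == i then -1 else 2).
Proof.
move=> HL. move: i; apply: ord4P.
- move=> Hj Hs.
  have e1 := Hj o1 isT. have e2 := Hj o2 isT. have e3 := Hj o3 isT.
  rewrite !HL !sum4 /= in e1 e2 e3.
  rewrite sum4 !HL !sum4 /= in Hs.
  have E2 : c o2 = c o1 by lra.
  have E3 : c o3 = c o1 by lra.
  have EI : c o0 = 1 - c o1 by lra.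
  rewrite E2 E3 EI in Hs.
  have Q : c o1 * (c o1 - 2) = 0 by lra.
  move/eqP: Q; rewrite mulf_eq0 subr_eq0 => /orP[/eqP Z|/eqP Z].
  + left; apply: ord4P; rewrite /= ?E2 ?E3 ?EI Z //; ring.
  + right; apply: ord4P; rewrite /= ?E2 ?E3 ?EI Z //; ring.
- move=> Hj Hs.
  have e1 := Hj o0 isT. have e2 := Hj o2 isT. have e3 := Hj o3 isT.
  rewrite !HL !sum4 /= in e1 e2 e3.
  rewrite sum4 !HL !sum4 /= in Hs.
  have E2 : c o2 = c o0 by lra.
  have E3 : c o3 = c o0 by lra.
  have EI : c o1 = 1 - c o0 by lra.
  rewrite E2 E3 EI in Hs.
  have Q : c o0 * (c o0 - 2) = 0 by lra.
  move/eqP: Q; rewrite mulf_eq0 subr_eq0 => /orP[/eqP Z|/eqP Z].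
  + left; apply: ord4P; rewrite /= ?E2 ?E3 ?EI Z //; ring.
  + right; apply: ord4P; rewrite /= ?E2 ?E3 ?EI Z //; ring.
- move=> Hj Hs.
  have e1 := Hj o0 isT. have e2 := Hj o1 isT. have e3 := Hj o3 isT.
  rewrite !HL !sum4 /= in e1 e2 e3.
  rewrite sum4 !HL !sum4 /= in Hs.
  have E2 : c o1 = c o0 by lra.
  have E3 : c o3 = c o0 by lra.
  have EI : c o2 = 1 - c o0 by lra.
  rewrite E2 E3 EI in Hs.
  have Q : c o0 * (c o0 - 2) = 0 by lra.
  move/eqP: Q; rewrite mulf_eq0 subr_eq0 => /orP[/eqP Z|/eqP Z].
  + left; apply: ord4P; rewrite /= ?E2 ?E3 ?EI Z //; ring.
  + right; apply: ord4P; rewrite /= ?E2 ?E3 ?EI Z //; ring.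
- move=> Hj Hs.
  have e1 := Hj o0 isT. have e2 := Hj o1 isT. have e3 := Hj o2 isT.
  rewrite !HL !sum4 /= in e1 e2 e3.
  rewrite sum4 !HL !sum4 /= in Hs.
  have E2 : c o1 = c o0 by lra.
  have E3 : c o2 = c o0 by lra.
  have EI : c o3 = 1 - c o0 by lra.
  rewrite E2 E3 EI in Hs.
  have Q : c o0 * (c o0 - 2) = 0 by lra.
  move/eqP: Q; rewrite mulf_eq0 subr_eq0 => /orP[/eqP Z|/eqP Z].
  + left; apply: ord4P; rewrite /= ?E2 ?E3 ?EI Z //; ring.
  + right; apply: ord4P; rewrite /= ?E2 ?E3 ?EI Z //; ring.
Qed.

End Rep.

Section Rep2.
Variable R : realType.
Local Notation vec := (vec R).
Local Notation psm := (psm R).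
Local Notation Sg := (Sgen R).
Implicit Types E : config R.

Lemma Wmat_rep E E' i : (forall j, j != i -> E' j = E j) -> (forall l, wr E' i l = repv E i l) ->
  Wmat E' = Sg i *m Wmat E.
Proof.
move=> HE Hi; apply/matrixP => a c; rewrite Sgen_mul WmatE.
case: eqP => [->|/eqP ai]; last by rewrite WmatE /wr HE.
rewrite Hi /repv WmatE. congr (_ * _ - _). by apply: eq_bigr => k _; rewrite WmatE.
Qed.

Lemma rep_ok E E' i : oriented_descartes E -> oriented_descartes E' ->
  (forall j, j != i -> E' j = E j) -> (forall l, wr E' i l = repv E i l) -> replacement E i E'.
Proof.
move=> OE OE' HE Hi.
have G := od_gram OE; have G' := od_gram OE'.
have Wf := od_wf OE; have Wf' := od_wf OE'.
have Gd : forall a, Lf (wr E a) (wr E a) = 2 by move=> a; rewrite G eqxx.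
have Go : forall a c, a != c -> Lf (wr E a) (wr E c) = -2 by move=> a c ac; rewrite G (negbTE ac).
have Ri : forall j, Lf (wr E' i) (wr E j) = if i == j then -14 else -2.
  by move=> j; rewrite (Lf_ext _ Hi) Lrep.
split => //.
- move=> S. have [k [Hk Kw]] := same_circ_k (Wf' i) (Wf i) S.
  have : Lf (wr E i) (wr E i) = k * Lf (wr E' i) (wr E i) by apply: Lf_scale.
  rewrite Gd Ri eqxx. case: Hk => ->; lra.
- move=> j ji p q Tp Tq epq; subst q.
  move/(tangent_Ov _ (Wf i) (Wf j)): Tp => [O1 O2 _].
  move/(tangent_Ov _ (Wf' i) (Wf j)): Tq => [O3 O4 _].
  have ij : i != j by rewrite eq_sym.
  have [lam [ln Hl]] := prop_tan (Gd i) (Gd j) (Go i j ij) (gram_nz G ij) O1 O2.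
  have Lij : Lf (wr E' i) (wr E j) = -2 by rewrite Ri (negbTE ij).
  have nz : ~ (forall l, uvec (wr E' i) (wr E j) l = 0).
    by have := gram_nz G' ij; rewrite /wr (HE j ji).
  have Gd' : Lf (wr E' i) (wr E' i) = 2 by rewrite G' eqxx.
  have [mu [mn Hm]] := prop_tan Gd' (Gd j) Lij nz O3 O4.
  have A : Lf (uvec (wr E i) (wr E j)) (wr E i) = 0.
    by rewrite Lf_addl Gd (LfC (wr E j)) Go //; ring.
  have B : Lf (uvec (wr E' i) (wr E j)) (wr E i) = -16.
    by rewrite Lf_addl Ri eqxx (LfC (wr E j)) Go //; ring.
  rewrite (Lf_scale _ Hl) in A. rewrite (Lf_scale _ Hm) in B.
  move/eqP: A; rewrite mulf_eq0 (negbTE ln) /= => /eqP A.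
  by move: B; rewrite A mulr0 => /eqP; rewrite eq_sym oppr_eq0 pnatr_eq0.
Qed.

Lemma good_pos_ext E E' : (forall i, E i = E' i) -> good_pos E -> good_pos E'.
Proof.
move=> H [W G F].
have Hw : forall i, wr E i = wr E' i by move=> i; rewrite /wr H.
split.
- by move=> i; rewrite -H.
- by move=> a b; rewrite -!Hw.
- by move=> a b ab; rewrite -!Hw; apply: F.
Qed.

Lemma repv_revc E i l : repv (revc E) i l = - repv E i l.
Proof.
rewrite /repv wr_revc. under eq_bigr => k _ do rewrite wr_revc.
rewrite sumrN. ring.
Qed.

Lemma rep_od E i : oriented_descartes E ->
  exists E', replacement E i E' /\ Wmat E' = Sg i *m Wmat E.
Proof.
move=> OE. case/od_good: (OE) => Hg.
- have [E' [Hg' HE Hi]] := rep_pos i Hg.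
  exists E'; split; last exact: Wmat_rep.
  apply: rep_ok => //. by apply/od_good; left.
- have [E'' [Hg' HE Hi]] := rep_pos i Hg.
  have HE2 : forall j, j != i -> revc E'' j = E j.
    by move=> j ji; rewrite /revc HE // /revc rev_rev.
  have Hi2 : forall l, wr (revc E'') i l = repv E i l.
    by move=> l; rewrite wr_revc Hi repv_revc opprK.
  exists (revc E''); split; last exact: Wmat_rep.
  apply: rep_ok => //. apply/od_good; right.
  apply: (good_pos_ext _ Hg') => j. by rewrite /revc rev_rev.
Qed.

Lemma rep_uniq E i E' : replacement E i E' -> Wmat E' = Sg i *m Wmat E.
Proof.
case=> OE OE' HE Hns _.
apply: Wmat_rep => // l.
have G := od_gram OE; have G' := od_gram OE'.
set y := wr E' i.
have [c Hc] := span4 G y.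
have Lyj : forall j, j != i -> Lf y (wr E j) = -2.
  move=> j ji. by have := G' i j; rewrite eq_sym (negbTE ji) /wr (HE j ji).
have HL : forall j, Lf y (wr E j) = \sum_k c k * (if k == j then 2 else -2).
  move=> j. rewrite (Lf_ext _ Hc) Lf_sum. apply: eq_bigr => k _. by rewrite G.
have Hs : \sum_j c j * Lf y (wr E j) = 2.
  have := G' i i. rewrite eqxx -/y => <-.
  rewrite [in RHS](Lf_ext _ Hc) Lf_sum. apply: eq_bigr => k _. by rewrite LfC.
case: (coef_sol HL Lyj Hs) => Hcs.
- exfalso; apply: Hns.
  have -> : E' i = E i.
    apply: wvec_inj; [exact: od_wf|exact: od_wf|] => l'.
    have := Hc l'. rewrite /y /wr => ->.
    under eq_bigr => k _ do rewrite Hcs.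
    by rewrite (sum_if (fun k => wvec (E k) l')); ring.
  by move=> p.
- rewrite Hc repvE. apply: eq_bigr => k _. by rewrite Hcs.
Qed.

End Rep2.

Section UU.
Variable R : realType.
Local Notation vec := (vec R).
Local Notation psm := (psm R).
Local Notation sgb := (sgb R).
Local Notation Sg := (Sgen R).
Implicit Types E : config R.

Lemma desc_distinct E i j : descartes E -> i != j -> ~ same_circle (E i) (E j).
Proof.
case=> Wf T _ ij S.
have [p Tp] := T i j ij.
move/(tangent_Ov _ (Wf i) (Wf j)): Tp => [_ _ U].
have [p1 [p2 [p12 [O1 O2]]]] := two_points (wf_Lf (Wf i)).
have C : forall q, Ov (wvec (E i)) q -> Ov (wvec (E j)) q.
  move=> q Oq. apply/(on_Lf _ (Wf j)). apply/S. exact/(on_Lf _ (Wf i)).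
by apply: p12; rewrite (U _ O1 (C _ O1)) (U _ O2 (C _ O2)).
Qed.

Lemma sgb_sq b : sgb b * sgb b = 1.
Proof. by case: b; rewrite /sgb ?mulrNN mulr1. Qed.

Lemma sgb_neq0 b : sgb b != 0.
Proof. by case: b; rewrite /sgb ?oppr_eq0 oner_eq0. Qed.

Lemma uu_psm E E' : oriented_descartes E -> oriented_descartes E' -> same_uu E E' ->
  exists s b, Wmat E = psm s b *m Wmat E'.
Proof.
move=> OE OE' [H1 _].
pose Pb i j := [forall l, wr E' j l == wr E i l] || [forall l, wr E' j l == - wr E i l].
have Pex : forall i, exists j, Pb i j.
  move=> i. have [j S] := H1 i.
  have [k [Hk Kw]] := same_circ_k (od_wf OE i) (od_wf OE' j) S.
  exists j. case: Hk => Hk; subst k; apply/orP; [left|right]; apply/forallP => l;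
    rewrite /wr Kw ?mul1r ?mulN1r //.
pose f i := odflt i [pick j | Pb i j].
have Hf : forall i, Pb i (f i).
  move=> i; rewrite /f; case: pickP => [j //|H].
  by have [j Hj] := Pex i; rewrite H in Hj.
pose bs i := ~~ [forall l, wr E' (f i) l == wr E i l].
have Hs : forall i l, wr E i l = sgb (bs i) * wr E' (f i) l.
  move=> i l. rewrite /bs. case: (boolP [forall l, _]) => [/forallP H|Hn] /=.
    by rewrite /sgb mul1r (eqP (H l)).
  have := Hf i; rewrite /Pb (negbTE Hn) /= => /forallP H.
  by rewrite /sgb (eqP (H l)) mulN1r opprK.
have G := od_gram OE; have G' := od_gram OE'.
have finj : injective f.
  move=> i1 i2 Ef. apply/eqP; apply: contraT => ne; exfalso.
  apply: (desc_distinct (proj1 OE) ne).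
  apply: (@k_same_circ _ _ _ (sgb (bs i2) * sgb (bs i1))); [exact: od_wf|exact: od_wf| |].
    by rewrite mulf_neq0 // sgb_neq0.
  move=> l. rewrite -/(wr E i2 l) -/(wr E i1 l) (Hs i2 l) (Hs i1 l) Ef.
  rewrite -mulrA (mulrA (sgb (bs i1))) sgb_sq mul1r. done.
have Hp : forall i j, i != j -> bs i = bs j.
  move=> i j ij.
  have fij : f i != f j by apply: contra ij => /eqP /finj ->.
  have := G i j. rewrite (negbTE ij) (Lf_scale _ (Hs i)) (Lf_scaler _ (Hs j)) G' (negbTE fij).
  case: (bs i); case: (bs j); rewrite /sgb //=; lra.
exists (perm finj), (bs o0).
apply/matrixP => a c. rewrite psm_mul !WmatE permE Hs.
case: (eqVneq a o0) => [->//|a0]. by rewrite (Hp _ _ a0).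
Qed.

Lemma psm_uu E E' s b : (forall i, wf_ocircle (E i)) -> (forall i, wf_ocircle (E' i)) ->
  Wmat E = psm s b *m Wmat E' -> same_uu E E'.
Proof.
move=> W W' H.
have Hs : forall i l, wvec (E' (s i)) l = sgb b * wvec (E i) l.
  move=> i l. move/matrixP: H => /(_ i l). rewrite psm_mul !WmatE /wr => ->.
  by rewrite mulrA sgb_sq mul1r.
split.
- move=> i; exists (s i). exact: (k_same_circ (W i) (W' _) (sgb_neq0 b) (Hs i)).
- move=> j; exists ((s^-1)%g j). have := k_same_circ (W _) (W' _) (sgb_neq0 b) (Hs ((s^-1)%g j)).
  by rewrite permKV.
Qed.

Lemma Wmat_inj E E' : (forall i, wf_ocircle (E i)) -> (forall i, wf_ocircle (E' i)) ->
  Wmat E = Wmat E' -> forall i, E i = E' i.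
Proof.
move=> W W' H i. apply: wvec_inj => // l.
by move/matrixP: H => /(_ i l); rewrite !WmatE.
Qed.

Definition spc (s : {perm 'I_4}) (b : bool) E : config R :=
  fun i => if b then reverse (E (s i)) else E (s i).

Lemma Wmat_spc s b E : Wmat (spc s b E) = psm s b *m Wmat E.
Proof.
apply/matrixP => a c. rewrite psm_mul !WmatE /wr /spc.
by case: b; rewrite /sgb ?wvec_rev ?mulN1r ?mul1r.
Qed.

Lemma good_pos_perm E (s : {perm 'I_4}) : good_pos E -> good_pos (fun i => E (s i)).
Proof.
case=> W G F; split.
- by move=> i.
- move=> a b. have := G (s a) (s b). by rewrite (inj_eq (@perm_inj _ s)).
- move=> a b ab. apply: F. by rewrite (inj_eq (@perm_inj _ s)).
Qed.

Lemma od_spc E s b : oriented_descartes E -> oriented_descartes (spc s b E).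
Proof.
move=> OE; apply/od_good.
case/od_good: OE => Hg; case: b.
- right. apply: (good_pos_ext _ (good_pos_perm s Hg)) => i. by rewrite /revc /spc rev_rev.
- left. exact: good_pos_perm.
- left. apply: (good_pos_ext _ (good_pos_perm s Hg)) => i. by rewrite /revc /spc.
- right. apply: (good_pos_ext _ (good_pos_perm s Hg)) => i. by rewrite /revc /spc.
Qed.

Lemma F_od (D D1 : config R) : oriented_descartes D -> in_F D D1 -> oriented_descartes D1.
Proof. move=> OD; elim => // E i E' _ _ [_ ? _ _ _]; done. Qed.

Lemma F_apo (D D1 : config R) : oriented_descartes D -> in_F D D1 ->
  exists g, in_apollonian g /\ Wmat D1 = g *m Wmat D.
Proof.
move=> OD; elim.
- exists 1%:M; split; [exact: apo1|by rewrite mul1mx].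
- move=> E i E' _ [g [Hg Eg]] Hr. exists (Sg i *m g); split; first exact: apoS.
  by rewrite (rep_uniq Hr) Eg mulmxA.
Qed.

Lemma apo_F (D D1 : config R) U : oriented_descartes D -> in_F D D1 -> in_apollonian U ->
  exists D2, in_F D D2 /\ Wmat D2 = U *m Wmat D1.
Proof.
move=> OD F1 HU.
apply: (@apo_ind R (fun U => exists D2, in_F D D2 /\ Wmat D2 = U *m Wmat D1) U HU).
- exists D1; split => //. by rewrite mul1mx.
- move=> i U0 _ [D2 [F2 E2]].
  have [E' [Hr EW]] := rep_od i (F_od OD F2).
  exists E'; split; first exact: inF_step F2 Hr.
  by rewrite EW E2 mulmxA.
Qed.

Lemma apo_ex E U : oriented_descartes E -> in_apollonian U ->
  exists E', oriented_descartes E' /\ Wmat E' = U *m Wmat E.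
Proof.
move=> OE HU.
apply: (@apo_ind R (fun U => exists E', oriented_descartes E' /\ Wmat E' = U *m Wmat E) U HU).
- exists E; split => //. by rewrite mul1mx.
- move=> i U0 _ [E1 [O1 E1W]].
  have [E' [Hr EW]] := rep_od i O1.
  exists E'; split; first by case: Hr.
  by rewrite EW E1W mulmxA.
Qed.

End UU.

Unset Implicit Arguments.
Definition PB := ({perm 'I_4} * bool)%type.
Lemma cardPB : #|{: PB}| = 48.
Proof. by rewrite card_prod card_Sn card_bool. Qed.
Definition pick48 (k : 'I_48) : PB := enum_val (cast_ord (esym cardPB) k).
Lemma pick48_inj : injective pick48.
Proof. move=> k l /enum_val_inj /cast_ord_inj. done. Qed.
Lemma pick48_surj (t : PB) : exists k, pick48 k = t.
Proof.
exists (cast_ord cardPB (enum_rank t)). by rewrite /pick48 cast_ordK enum_rankK.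
Qed.

Theorem theorem4p3 (R : realType) (D : config R) :
  oriented_descartes D -> pos_oriented D ->
  (* invariance of DD(P) under the Apollonian group *)
  (forall (E : config R) (U : 'M[R]_4), in_DP D E -> in_apollonian U ->
     (exists E' : config R, oriented_descartes E' /\ Wmat E' = U *m Wmat E) /\
     (forall E' : config R, oriented_descartes E' -> Wmat E' = U *m Wmat E ->
        in_DP D E')) /\
  (* DD(P) is the union of exactly 48 (pairwise distinct, hence disjoint)
     orbits, each containing exactly one ordered, oriented representative of
     each unordered, unoriented configuration underlying a member of F(D) *)
  (exists reps : 'I_48 -> config R,
     [/\ forall k, in_DP D (reps k),
         forall k l, k != l -> forall E,
           ~ (apo_orbit (reps k) E /\ apo_orbit (reps l) E),
         forall E, in_DP D E <-> exists k, apo_orbit (reps k) E &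
         forall k D', in_F D D' ->
           exists E, [/\ apo_orbit (reps k) E, same_uu E D' &
             forall E2, apo_orbit (reps k) E2 -> same_uu E2 D' ->
               forall i, E2 i = E i]]).
Proof.
move=> OD _.
have UD := W_unit (od_gram OD).
have Wc : forall A B : 'M[R]_4, A *m Wmat D = B *m Wmat D -> A = B.
  move=> A B H. exact: (can_inj (mulmxK UD)).
have P1 : forall (E : config R) (U : 'M[R]_4), in_DP D E -> in_apollonian U ->
     (exists E' : config R, oriented_descartes E' /\ Wmat E' = U *m Wmat E) /\
     (forall E' : config R, oriented_descartes E' -> Wmat E' = U *m Wmat E ->
        in_DP D E').
  move=> E U [OE [D1 [F1 S1]]] HU. split; first exact: apo_ex OE HU.
  move=> E' OE' HE'. split => //.
  have OD1 := F_od OD F1.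
  have [s [b HW]] := uu_psm OE OD1 S1.
  have [U' [HU' EU]] := apo_psm s b HU.
  have [D2 [F2 W2]] := apo_F OD F1 HU'.
  exists D2; split => //.
  apply: (@psm_uu R _ _ s b); [exact: od_wf|exact: od_wf (F_od OD F2)|].
  by rewrite HE' HW mulmxA EU -mulmxA W2.
split => //.
pose reps := fun k : 'I_48 => spc (pick48 k).1 (pick48 k).2 D.
have Rin : forall k, in_DP D (reps k).
  move=> k. split; first exact: od_spc.
  exists D; split; first exact: inF_refl.
  apply: (@psm_uu R _ _ (pick48 k).1 (pick48 k).2); [exact: od_wf (od_spc _ _ OD)|exact: od_wf|].
  exact: Wmat_spc.
exists reps; split => //.
- move=> k l kl E [[OE1 [U1 [H1 E1]]] [OE2 [U2 [H2 E2]]]].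
  rewrite /reps Wmat_spc in E1. rewrite /reps Wmat_spc in E2.
  have : U1 *m psm R (pick48 k).1 (pick48 k).2 = U2 *m psm R (pick48 l).1 (pick48 l).2.
    by apply: Wc; rewrite -!mulmxA -E1 -E2.
  case/(psm_inj H1 H2) => Es Eb.
  move/negP: kl; apply; apply/eqP; apply: pick48_inj.
  by case: (pick48 k) Es Eb => ? ?; case: (pick48 l) => ? ? /= -> ->.
- move=> E; split.
  + case=> OE [D1 [F1 S1]].
    have OD1 := F_od OD F1.
    have [s [b HW]] := uu_psm OE OD1 S1.
    have [g [Hg Wg]] := F_apo OD F1.
    have [g' [Hg' Eg]] := psm_apo s b Hg.
    have [k Hk] := pick48_surj (s, b).
    exists k; split => //. exists g'; split => //.
    by rewrite /reps Wmat_spc Hk /= HW Wg mulmxA Eg -mulmxA.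
  + case=> k [OE [U [HU EU]]]. exact: (proj2 (P1 _ _ (Rin k) HU)) E OE EU.
- move=> k D' F'.
  have OD' := F_od OD F'.
  have [g [Hg Wg]] := F_apo OD F'.
  set s := (pick48 k).1; set b := (pick48 k).2.
  have [g' [Hg' Eg]] := psm_apo s b Hg.
  exists (spc s b D'); split.
  + split; first exact: od_spc.
    exists g'; split => //.
    by rewrite /reps Wmat_spc Wmat_spc -/s -/b Wg mulmxA Eg -mulmxA.
  + apply: (@psm_uu R _ _ s b); [exact: od_wf (od_spc _ _ OD')|exact: od_wf|].
    exact: Wmat_spc.
  + move=> E2 [OE2 [U2 [HU2 E2W]]] S2.
    have [s2 [b2 HW2]] := uu_psm OE2 OD' S2.
    have [g2 [Hg2 Eg2]] := psm_apo s2 b2 Hg.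
    have : g2 *m psm R s2 b2 = U2 *m psm R s b.
      apply: Wc. by rewrite -Eg2 -mulmxA -Wg -HW2 E2W /reps Wmat_spc mulmxA.
    case/(psm_inj Hg2 HU2) => Es Eb.
    apply: Wmat_inj; [exact: od_wf|exact: od_wf (od_spc _ _ OD')|].
    by rewrite HW2 Wmat_spc Es Eb.
Qed.
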